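(* Let $M$ be a commutative monoid (written multiplicatively), $n>1$ and $0\le p<q\le n$. The simplicial set $K(M,2)$ satisfies the Beck–Chevalley condition $\mathrm{BC}_{p,q}[n]$ if and only if: for any elements $a_{ijk}\in M$, indexed by $0\le i<j<k\le n$ with $\{p,q\}\not\subset\{i,j,k\}$, satisfying $a_{ikl}a_{ijk}=a_{ijl}a_{jkl}$ for all $0\le i<j<k<l\le n$ with $\{p,q\}\not\subset\{i,j,k,l\}$, there exist elements $x_{ipq}$ ($0\le i<p$), $y_{pjq}$ ($p<j<q$), $z_{pqk}$ ($q<k\le n$) of $M$ satisfying (1) $x_{ipq}a_{ijp}=a_{ijq}x_{jpq}$ for all $0\le i<j<p$; (2) $y_{pkq}a_{pjk}=y_{pjq}a_{jkq}$ for all $p<j<k<q$; (3) $a_{pkl}z_{pqk}=z_{pql}a_{qkl}$ for all $q<k<l\le n$; (4) $x_{ipq}y_{pjq}=a_{ijq}a_{ipj}$ for all $0\le i<p<j<q$; (5) $a_{iqk}x_{ipq}=a_{ipk}z_{pqk}$ for all $0\le i<p<q<k\le n$; (6) $z_{pqk}y_{pjq}=a_{pjk}a_{jqk}$ for all $p<j<q<k\le n$.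
   Context: For a commutative monoid $M$, $K(M,2)$ is the simplicial set whose $n$-simplices are families $(a_{ijk})_{0\le i<j<k\le n}$ of elements of $M$ with $a_{ikl}a_{ijk}=a_{ijl}a_{jkl}$ for all $0\le i<j<k<l\le n$; the $j$-th face map omits all entries involving index $j$ (and reindexes), and degeneracies repeat an index and insert the unit of $M$. The Beck–Chevalley condition $\mathrm{BC}_{p,q}[n]$ on a simplicial set $S$: for any $(n-1)$-simplices $c_p,c_q$ with $d_pc_q=d_{q-1}c_p$ there exists an $n$-simplex $x$ with $d_px=c_p$, $d_qx=c_q$. *)

(* Defs.v *)
From HB Require Import structures.
From mathcomp Require Import all_boot all_order all_algebra.
Set Implicit Arguments. Unset Strict Implicit. Unset Printing Implicit Defensive.
Import GRing.Theory.
Local Open Scope ring_scope.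

(* A commutative monoid M is an nmodType (additive notation: the paper's
   product a*b is written a + b, the unit is 0). *)

(* Raw families of elements of M indexed by triples of naturals; only the
   entries with 0 <= i < j < k <= n matter for an n-simplex. *)
Definition fam3 (M : nmodType) := nat -> nat -> nat -> M.

Definition K2simplex (M : nmodType) (n : nat) (a : fam3 M) : Prop :=
  forall i j k l : nat, (i < j)%N -> (j < k)%N -> (k < l)%N -> (l <= n)%N ->
    a i k l + a i j k = a i j l + a j k l.

Definition K2eq (M : nmodType) (n : nat) (a b : fam3 M) : Prop :=
  forall i j k : nat, (i < j)%N -> (j < k)%N -> (k <= n)%N -> a i j k = b i j k.

Definition coface (j i : nat) : nat := if (i < j)%N then i else i.+1.

Definition K2face (M : nmodType) (j : nat) (a : fam3 M) : fam3 M :=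
  fun i k l => a (coface j i) (coface j k) (coface j l).

Definition K2_BC (M : nmodType) (p q n : nat) : Prop :=
  forall cp cq : fam3 M,
    K2simplex n.-1 cp -> K2simplex n.-1 cq ->
    K2eq n.-2 (K2face p cq) (K2face q.-1 cp) ->
    exists x : fam3 M,
      [/\ K2simplex n x, K2eq n.-1 (K2face p x) cp & K2eq n.-1 (K2face q x) cq].

Definition not_both (p q : nat) (s : seq nat) : bool :=
  ~~ ((p \in s) && (q \in s)).

Definition K2_BC_cond (M : nmodType) (p q n : nat) : Prop :=
  forall a : fam3 M,
    (forall i j k l : nat, (i < j)%N -> (j < k)%N -> (k < l)%N -> (l <= n)%N ->
       not_both p q [:: i; j; k; l] ->
       a i k l + a i j k = a i j l + a j k l) ->
    exists x y z : nat -> M,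
      (forall i j, (i < j)%N -> (j < p)%N ->
             x i + a i j p = a i j q + x j) /\
          (forall j k, (p < j)%N -> (j < k)%N -> (k < q)%N ->
             y k + a p j k = y j + a j k q) /\
          (forall k l, (q < k)%N -> (k < l)%N -> (l <= n)%N ->
             a p k l + z k = z l + a q k l) /\
          (forall i j, (i < p)%N -> (p < j)%N -> (j < q)%N ->
             x i + y j = a i j q + a i p j) /\
          (forall i k, (i < p)%N -> (q < k)%N -> (k <= n)%N ->
             a i q k + x i = a i p k + z k) /\
          (forall j k, (p < j)%N -> (j < q)%N -> (q < k)%N -> (k <= n)%N ->
             z k + y j = a p j k + a j q k).

(* Main.v *)
Require Import Defs.
From HB Require Import structures.
From mathcomp Require Import all_boot all_order all_algebra zify.
Import GRing.Theory.
Local Open Scope ring_scope.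
Definition unface (j t : nat) : nat := if (t < j)%N then t else t.-1.

Ltac noif t := lazymatch t with context[if _ then _ else _] => fail | _ => idtac end.
Ltac crunch := rewrite /coface /unface;
  repeat match goal with |- context[(?a < ?b)%N] => noif a; noif b; case: (ltnP a b) => ? end;
  lia.

Lemma L1 j t : t <> j -> coface j (unface j t) = t. Proof. crunch. Qed.
Lemma L2 j t : unface j (coface j t) = t. Proof. crunch. Qed.
Lemma L4 p q s : (p < q)%N -> coface q (coface p s) = coface p (coface q.-1 s). Proof. crunch. Qed.
Lemma L5 p q t : (p < q)%N -> t <> p -> t <> q -> coface q.-1 (unface p (unface q t)) = unface p t. Proof. crunch. Qed.
Lemma L6 p q t : (p < q)%N -> t <> p -> t <> q -> coface p (unface p (unface q t)) = unface q t. Proof. crunch. Qed.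
Lemma cf_lt j a b : (a < b)%N -> (coface j a < coface j b)%N. Proof. crunch. Qed.
Lemma cf_le j a n : (1 <= n)%N -> (a <= n.-1)%N -> (coface j a <= n)%N. Proof. crunch. Qed.
Lemma cf_ne j a : coface j a <> j. Proof. crunch. Qed.
Lemma uf_lt j a b : (a < b)%N -> a <> j -> b <> j -> (unface j a < unface j b)%N. Proof. crunch. Qed.
Lemma uf_le j a n : (a <= n)%N -> (j <= n)%N -> a <> j -> (unface j a <= n.-1)%N. Proof. crunch. Qed.
Ltac slia := lazymatch goal with |- context[GRing.add] => exfalso; lia | |- _ => lia end.

Lemma L7 p q t : (p < q)%N -> t <> p -> t <> q -> unface q t <> p. Proof. crunch. Qed.

Section S.
Variable M : nmodType.

Lemma faceEq n j (x c : fam3 M) : (1 <= n)%N -> (j <= n)%N -> K2eq n.-1 (K2face j x) c ->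
  forall i k l, (i < k)%N -> (k < l)%N -> (l <= n)%N -> i <> j -> k <> j -> l <> j ->
  x i k l = c (unface j i) (unface j k) (unface j l).
Proof.
move=> n1 jn H i k l ik kl ln ij kj lj.
have := H (unface j i) (unface j k) (unface j l).
rewrite /K2face !L1 //; apply; [exact: uf_lt|exact: uf_lt|exact: uf_le].
Qed.

Lemma simplex_face n j (a : fam3 M) : (1 <= n)%N ->
  (forall i k l m, (i < k)%N -> (k < l)%N -> (l < m)%N -> (m <= n)%N ->
     i <> j -> k <> j -> l <> j -> m <> j -> a i l m + a i k l = a i k m + a k l m) ->
  K2simplex n.-1 (K2face j a).
Proof.
move=> n1 H i k l m ik kl lm mn; rewrite /K2face.
apply: H; rewrite ?cf_lt ?cf_le //; exact: cf_ne.
Qed.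
End S.
Arguments faceEq {M n j x c}.
Arguments simplex_face {M n j a}.

Theorem mainTheorem9 (M : nmodType) (n p q : nat) :
  (1 < n)%N -> (p < q)%N -> (q <= n)%N ->
  (K2_BC M p q n <-> K2_BC_cond M p q n).
Proof.
move=> n1 pq qn; have n1' : (1 <= n)%N by slia.
have pn : (p <= n)%N by slia.
split.
- move=> BC a Ha.
  have Hj : forall j, j \in [:: p; q] -> forall i k l m, (i < k)%N -> (k < l)%N -> (l < m)%N -> (m <= n)%N ->
     i <> j -> k <> j -> l <> j -> m <> j -> a i l m + a i k l = a i k m + a k l m.
    move=> j; rewrite !inE => hj i k l m ik kl lm mn ij kj lj mj; apply: Ha => //.
    rewrite /not_both !inE; slia.
  have Hcomp : K2eq n.-2 (K2face p (K2face q a)) (K2face q.-1 (K2face p a)).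
    by move=> i k l _ _ _; rewrite /K2face /= !(@L4 p q).
  have [x [Hx Hxp Hxq]] := BC (K2face p a) (K2face q a)
     (simplex_face n1' (Hj p (mem_head _ _))) (simplex_face n1' (Hj q ltac:(by rewrite !inE eqxx orbT)))
     Hcomp.
  have xP : forall i k l, (i < k)%N -> (k < l)%N -> (l <= n)%N -> i <> p -> k <> p -> l <> p -> x i k l = a i k l.
    move=> i k l ik kl ln ip kp lp; rewrite (faceEq n1' pn Hxp) // /K2face !L1 //.
  have xQ : forall i k l, (i < k)%N -> (k < l)%N -> (l <= n)%N -> i <> q -> k <> q -> l <> q -> x i k l = a i k l.
    move=> i k l ik kl ln ip kp lp; rewrite (faceEq n1' qn Hxq) // /K2face !L1 //.
  exists (fun i => x i p q), (fun j => x p j q), (fun k => x p q k).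
  split; [|split; [|split; [|split; [|split]]]].
  + move=> i j ij jp; have := Hx i j p q ij jp pq qn.
    rewrite (xQ i j p) ?(xP i j q) //; slia.
  + move=> j k pj jk kq; have := Hx p j k q pj jk kq qn.
    rewrite (xQ p j k) ?(xP j k q) //; slia.
  + move=> k l qk kl ln; have := Hx p q k l pq qk kl ln.
    rewrite (xQ p k l) ?(xP q k l) //; slia.
  + move=> i j ip pj jq; have := Hx i p j q ip pj jq qn.
    rewrite (xP i j q) ?(xQ i p j) //; try slia; by move=> ->.
  + move=> i k ip qk kn; have := Hx i p q k ip pq qk kn.
    rewrite (xP i q k) ?(xQ i p k) //; slia.
  + move=> j k pj jq qk kn; have := Hx p j q k pj jq qk kn.
    rewrite (xQ p j k) ?(xP j q k) //; slia.
- move=> Hc cp cq Hcp Hcq Hcomp.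
  pose a : fam3 M := fun i j k => if (i == q) || (j == q) || (k == q)
     then cp (unface p i) (unface p j) (unface p k) else cq (unface q i) (unface q j) (unface q k).
  have compat : forall i j k, (i < j)%N -> (j < k)%N -> (k <= n)%N -> i <> p -> j <> p -> k <> p ->
      i <> q -> j <> q -> k <> q ->
      cq (unface q i) (unface q j) (unface q k) = cp (unface p i) (unface p j) (unface p k).
    move=> i j k ij jk kn ip jp kp iq jq kq.
    have := Hcomp (unface p (unface q i)) (unface p (unface q j)) (unface p (unface q k)).
    rewrite /K2face !L6 // !L5 //; apply.
    - by apply: uf_lt; [apply: uf_lt| apply: L7 | apply: L7].
    - by apply: uf_lt; [apply: uf_lt| apply: L7 | apply: L7].
    - apply: (@uf_le p _ n.-1); [exact: uf_le | slia | exact: L7].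
  have aQ : forall i j k, i <> q -> j <> q -> k <> q -> a i j k = cq (unface q i) (unface q j) (unface q k).
    move=> i j k iq jq kq; rewrite /a; case: ifP => //; slia.
  have aP : forall i j k, (i < j)%N -> (j < k)%N -> (k <= n)%N -> i <> p -> j <> p -> k <> p ->
      a i j k = cp (unface p i) (unface p j) (unface p k).
    move=> i j k ij jk kn ip jp kp; rewrite /a; case: ifP => // h.
    apply: compat => //; slia.
  have Ha : forall i j k l : nat, (i < j)%N -> (j < k)%N -> (k < l)%N -> (l <= n)%N ->
       not_both p q [:: i; j; k; l] -> a i k l + a i j k = a i j l + a j k l.
    move=> i j k l ij jk kl ln; rewrite /not_both !inE => nb.
    have [hp|hq] : (i<>p/\j<>p/\k<>p/\l<>p) \/ (i<>q/\j<>q/\k<>q/\l<>q) by slia.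
    + rewrite (aP i k l) ?(aP i j k) ?(aP i j l) ?(aP j k l); try slia.
      apply: Hcp; try apply: uf_lt; try apply: uf_le; slia.
    + rewrite (aQ i k l) ?(aQ i j k) ?(aQ i j l) ?(aQ j k l); try slia.
      apply: Hcq; try apply: uf_lt; try apply: uf_le; slia.
  have [X [Y [Z [H1 [H2 [H3 [H4 [H5 H6]]]]]]]] := Hc a Ha.
  pose x : fam3 M := fun i j k => if (j == p) && (k == q) then X i
     else if (i == p) && (k == q) then Y j else if (i == p) && (j == q) then Z k else a i j k.
  have xa : forall i j k, (i <> p /\ j <> p /\ k <> p) \/ (i <> q /\ j <> q /\ k <> q) -> x i j k = a i j k.
    move=> i j k h; rewrite /x; repeat (case: eqP => ? /=); try slia; done.
  exists x; split.
  + move=> i j k l ij jk kl ln.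
    have [nb|[hp hq]] : ((i<>p/\j<>p/\k<>p/\l<>p) \/ (i<>q/\j<>q/\k<>q/\l<>q)) \/
       ((i=p\/j=p\/k=p\/l=p) /\ (i=q\/j=q\/k=q\/l=q)) by slia.
    * rewrite !xa; try slia; apply: Ha => //; rewrite /not_both !inE; slia.
    * rewrite /x; repeat (case: eqP => ? /=); try slia.
      1-6: subst; first [ apply: H1; slia | apply: H2; slia | apply: H3; slia | apply: H5; slia
                 | apply: H6; slia | symmetry; apply: H4; slia ].
  + move=> i j k ij jk kn; rewrite /K2face xa; last by left; split; [|split]; exact: cf_ne.
    rewrite aP ?L2 //; try exact: cf_ne; try exact: cf_lt; exact: cf_le.
  + move=> i j k ij jk kn; rewrite /K2face xa; last by right; split; [|split]; exact: cf_ne.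
    by rewrite aQ ?L2 //; exact: cf_ne.
Qed.
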